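(* Let $G$ be a connected graph with vertex set $\{u_1,\dots,u_n\}$, $n\ge2$, and let $\mathcal{H}=\{H_1,\dots,H_n\}$ be a family of graphs. Then $\dim_l(G\circ\mathcal{H})=\sum_{i=1}^n\operatorname{adim}_l(H_i)$ if and only if (a) for every two adjacent vertices $u_i,u_j\in I$ not belonging to the same true twin equivalence class of $G$ there exists $u\in V(G)-(V_E\cup\{u_i,u_j\})$ with $d_G(u,u_i)\ne d_G(u,u_j)$, and (b) each true twin equivalence class of $G$ contains at most one vertex $u_i$ with $H_i\in\mathcal{G}$.
   Context: All graphs are finite and simple with at least one vertex. $d_G$ is shortest-path distance ($+\infty$ between components), $d_{G,2}=\min\{d_G,2\}$; $s$ distinguishes $x,y$ w.r.t. $d$ if $d(s,x)\ne d(s,y)$. $\dim_l(G)$: minimum size of $S\subseteq V(G)$ such that any two adjacent vertices are distinguished w.r.t. $d_G$ by some vertex of $S$. $\operatorname{adim}_l(H)$: minimum size of $S\subseteq V(H)$ such that any two adjacent vertices are distinguished w.r.t. $d_{H,2}$ by some vertex of $S$; minimum such sets are local adjacency bases. $\Phi$: class of edgeless graphs. $\mathcal{G}$: class of graphs $H$ such that every local adjacency basis $B$ of $H$ satisfies $B\subseteq N_H(v)$ for some $v\in V(H)$. True twins: $N[x]=N[y]$; $T(G)$ is the union of the non-singleton true twin equivalence classes of $G$. $V_E=\{u_i\in V(G)-T(G): H_i\in\Phi\}$, $I=\{u_i\in V(G): H_i\in\mathcal{G}\}$. Lexicographic product $G\circ\mathcal{H}$: vertex set $\bigcup_i\{u_i\}\times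 V(H_i)$, $(u_i,v)\sim(u_j,w)$ iff $u_iu_j\in E(G)$, or $i=j$ and $vw\in E(H_i)$. *)

(* Defs.v *)
From mathcomp Require Import all_boot.
Set Implicit Arguments. Unset Strict Implicit. Unset Printing Implicit Defensive.

Section Metric.
Variables (T : finType) (e : rel T).

Fixpoint walkn (k : nat) (x y : T) : bool :=
  if k is k'.+1 then [exists z, e x z && walkn k' z y] else x == y.

(* shortest-path distance; None encodes +infinity (different components).
   A shortest walk in a finite graph has length < #|T|. *)
Definition dist (x y : T) : option nat :=
  ohead [seq k <- iota 0 #|T| | walkn k x y].

Definition dist2 (x y : T) : nat :=
  if dist x y is Some k then minn k 2 else 2.

Definition local_resolving (S : {set T}) : bool :=
  [forall x, forall y, e x y ==> [exists s in S, dist s x != dist s y]].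

Definition local_adj_gen (S : {set T}) : bool :=
  [forall x, forall y, e x y ==> [exists s in S, dist2 s x != dist2 s y]].

(* minimum sizes; the full vertex set always qualifies *)
Definition ldim : nat :=
  \big[minn/#|T|]_(S : {set T} | local_resolving S) #|S|.

Definition ladim : nat :=
  \big[minn/#|T|]_(S : {set T} | local_adj_gen S) #|S|.

Definition local_adj_basis (B : {set T}) : Prop :=
  local_adj_gen B /\ #|B| = ladim.

Definition open_nb (v : T) : {set T} := [set w | e v w].
Definition closed_nb (v : T) : {set T} := [set w | (w == v) || e v w].

Definition true_twins (x y : T) : bool := closed_nb x == closed_nb y.

Definition in_TG (x : T) : Prop := exists y, y != x /\ true_twins x y.

Definition edgeless : Prop := forall x y, ~~ e x y.

Definition in_calG : Prop :=
  forall B, local_adj_basis B -> exists v, B \subset open_nb v.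

End Metric.

Record sgraph := SGraph {
  svert :> finType;
  sadj : rel svert;
  sadj_sym : symmetric sadj;
  sadj_irr : irreflexive sadj;
  svert_nonempty : 0 < #|svert| }.

Definition lex_vert (T : finType) (H : T -> sgraph) : finType :=
  {i : T & svert (H i)}.

Definition lex_adj (T : finType) (e : rel T) (H : T -> sgraph) :
  rel (lex_vert H) :=
  fun p q => e (tag p) (tag q) ||
    ((tag p == tag q) && sadj (tagged p) (tagged_as p q)).
Arguments lex_adj {T} e H.

(* Main.v *)
Require Import Defs.
From mathcomp Require Import all_boot.
From Stdlib Require Import Classical.
Set Implicit Arguments. Unset Strict Implicit. Unset Printing Implicit Defensive.

Section Met.
Variables (T : finType) (e : rel T).

Lemma walknP k x y :
  walkn e k x y <-> exists p, [/\ size p = k, path e x p & last x p = y].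
Proof.
elim: k x => [|k IH] x /=.
  split; first by move/eqP=> ->; exists [::]; split.
by move=> [[|a l] [sz _ l0]] //; rewrite -l0.
split.
  case/existsP=> z /andP[exz /IH [p [sp pp lp]]].
  by exists (z :: p); rewrite /= exz sp pp lp.
case=> [[|z p] [//= [sp] /andP[exz pp] lp]].
by apply/existsP; exists z; rewrite exz; apply/IH; exists p.
Qed.

Lemma walk_short k x y : walkn e k x y -> exists k', k' < #|T| /\ walkn e k' x y.
Proof.
case/walknP=> p [_ pp lp].
case: (shortenP pp) lp => p' pp' up' _ lp'.
exists (size p'); split; last by apply/walknP; exists p'.
have := card_uniqP up'. move=> /= H.
by have := max_card (mem (x :: p')); rewrite H.
Qed.

Lemma walk_dec x y : (exists k, walkn e k x y) \/ (forall k, ~~ walkn e k x y).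
Proof.
case: (boolP [exists k : 'I_#|T|, walkn e k x y]).
  by case/existsP=> k Hk; left; exists k.
move=> Hn; right=> k; apply/negP=> Hk.
case: (walk_short Hk) => k' [lk' Hk'].
by move/existsP: Hn; apply; exists (Ordinal lk').
Qed.

Lemma ohead_filter_iota (P : pred nat) m N :
  P m -> m < N -> (forall k, k < m -> ~~ P k) ->
  ohead [seq k <- iota 0 N | P k] = Some m.
Proof.
move=> Pm mN Hlt.
rewrite -(subnKC (ltnW mN)) iotaD filter_cat /= add0n.
have -> : [seq k <- iota 0 m | P k] = [::].
  apply/eqP; rewrite -[_ == _]negbK -has_filter; apply/hasPn=> k.
  by rewrite mem_iota add0n => /andP[_ /Hlt].
have : 0 < N - m by rewrite subn_gt0.
case: (N - m) => [|n] //= _.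
by rewrite Pm.
Qed.

Lemma dist_Some x y m :
  walkn e m x y -> (forall k, walkn e k x y -> m <= k) -> dist e x y = Some m.
Proof.
move=> Hm Hmin; rewrite /dist.
have mN : m < #|T|.
  by case: (walk_short Hm) => k' [lk' /Hmin mk]; exact: leq_ltn_trans mk lk'.
apply: ohead_filter_iota => // k km; by apply/negP => /Hmin; rewrite leqNgt km.
Qed.

Lemma dist_None x y : (forall k, ~~ walkn e k x y) -> dist e x y = None.
Proof.
move=> H; rewrite /dist.
suff -> : [seq k <- iota 0 #|T| | walkn e k x y] = [::] by [].
by apply/eqP; rewrite -[_ == _]negbK -has_filter; apply/hasPn=> k _; apply: H.
Qed.

Lemma dist_min x y : (exists m, [/\ dist e x y = Some m, walkn e m x y &
  forall k, walkn e k x y -> m <= k]) \/ (dist e x y = None /\ forall k, ~~ walkn e k x y).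
Proof.
case: (walk_dec x y) => [ex|nx]; last by right; split=> //; apply: dist_None.
left.
have [mm Hm Hmin] : exists2 m, walkn e m x y & forall k, walkn e k x y -> m <= k.
  by case: (ex_minnP ex) => m0 H1 H2; exists m0.
by exists mm; split=> //; apply: dist_Some.
Qed.

Lemma dist0 x : dist e x x = Some 0.
Proof. by apply: dist_Some => //=. Qed.

Lemma dist_ne0 x y : x != y -> dist e x y <> Some 0.
Proof.
move=> nxy; case: (dist_min x y) => [[m [-> Hm _]] [mE]|[-> //]].
by move: Hm; rewrite mE /= (negbTE nxy).
Qed.

Lemma dist1 x y : irreflexive e -> e x y -> dist e x y = Some 1.
Proof.
move=> irr exy; apply: dist_Some; first by apply/existsP; exists y; rewrite exy /=.
case=> //= /eqP xy; by move: exy; rewrite xy irr.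
Qed.

End Met.

Lemma dist_eq_of (T1 T2 : finType) (e1 : rel T1) (e2 : rel T2) a b c d :
  (forall k, walkn e1 k a b -> exists2 k', k' <= k & walkn e2 k' c d) ->
  (forall k, walkn e2 k c d -> exists2 k', k' <= k & walkn e1 k' a b) ->
  dist e1 a b = dist e2 c d.
Proof.
move=> H12 H21.
case: (dist_min e1 a b) => [[m1 [-> W1 M1]] | [-> N1]];
case: (dist_min e2 c d) => [[m2 [-> W2 M2]] | [-> N2]] //.
- congr Some; apply/eqP; rewrite eqn_leq.
  case: (H21 _ W2) => k' lk /M1 lk'; rewrite (leq_trans lk' lk).
  by case: (H12 _ W1) => k'' lk2 /M2 lk''; rewrite (leq_trans lk'' lk2).
- by case: (H12 _ W1) => k' _ W; move: (N2 k'); rewrite W.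
- by case: (H21 _ W2) => k' _ W; move: (N1 k'); rewrite W.
Qed.

Section Met2.
Variables (T : finType) (e : rel T).

Lemma walknSr k x y : walkn e k.+1 x y = [exists z, walkn e k x z && e z y].
Proof.
elim: k x => [|k IH] x.
  apply/existsP/existsP => [[z /andP[exz /eqP <-]]|[z /andP[/eqP <- ezy]]].
    by exists x; rewrite /= eqxx exz.
  by exists y; rewrite /= ezy eqxx.
have -> : walkn e k.+2 x y = [exists z, e x z && walkn e k.+1 z y] by [].
apply/existsP/existsP.
  case=> z /andP[exz]; rewrite IH => /existsP[z' /andP[w ez'y]].
  exists z'; rewrite ez'y andbT.
  by change ([exists z0, e x z0 && walkn e k z0 z']); apply/existsP; exists z; rewrite exz w.
case=> z' /andP[W ez'y].
have : [exists z0, e x z0 && walkn e k z0 z'] by exact W.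
case/existsP=> z /andP[exz w].
by exists z; rewrite exz IH; apply/existsP; exists z'; rewrite w ez'y.
Qed.

Lemma walkn_sym : symmetric e -> forall k x y, walkn e k x y = walkn e k y x.
Proof.
move=> es; elim=> [|k IH] x y; first by rewrite /= eq_sym.
rewrite walknSr /=; apply/existsP/existsP => [[z /andP[a b]]|[z /andP[a b]]];
  by exists z; rewrite es IH a b.
Qed.

Lemma dist_sym : symmetric e -> forall x y, dist e x y = dist e y x.
Proof.
move=> es x y; apply: dist_eq_of => k W; exists k => //; by rewrite walkn_sym.
Qed.

Lemma dist_small x y : irreflexive e -> (x == y) || e x y || walkn e 2 x y ->
  dist e x y = Some (if x == y then 0 else if e x y then 1 else 2).
Proof.
move=> irr H.
case: eqP => [<-|/eqP nxy]; first exact: dist0.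
case exy: (e x y); first exact: dist1.
move: H; rewrite (negbTE nxy) exy /= => W2.
apply: dist_Some => // -[|[|k]] //=; first by rewrite (negbTE nxy).
by case/existsP=> z /andP[exz /eqP zy]; move: exy; rewrite -zy exz.
Qed.

Lemma dist2_formula x y : irreflexive e ->
  dist2 e x y = if x == y then 0 else if e x y then 1 else 2.
Proof.
move=> irr; rewrite /dist2.
case: eqP => [<-|/eqP nxy]; first by rewrite dist0.
case exy: (e x y); first by rewrite dist1.
case: (dist_min e x y) => [[m [-> W _]]|[-> _]] //.
case: m W => [|[|m]] //=; first by rewrite (negbTE nxy).
by case/existsP=> z /andP[exz /eqP zy]; move: exy; rewrite -zy exz.
Qed.

Lemma twins_adj a b : true_twins e a b -> a != b -> e a b.
Proof.
move=> /eqP tw nab.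
have : b \in closed_nb e b by rewrite inE eqxx.
by rewrite -tw inE eq_sym (negbTE nab).
Qed.

Lemma twin_dist a b k : symmetric e -> true_twins e a b -> k != a -> k != b ->
  dist e a k = dist e b k.
Proof.
move=> es tw nka nkb.
have tr : forall a b, true_twins e a b -> k != a -> k != b ->
   forall m, walkn e m a k -> exists2 m', m' <= m & walkn e m' b k.
  move=> a' b' /eqP tw' nka' nkb' [|m] /=; first by move/eqP=> ak; move: nka'; rewrite ak eqxx.
  case/existsP=> z /andP[ea'z W].
  case: (eqVneq z b') => [zb|nzb]; first by exists m => //; rewrite -zb.
  exists m.+1 => //=; apply/existsP; exists z; rewrite W andbT.
  have : z \in closed_nb e a' by rewrite inE ea'z orbT.
  by rewrite tw' inE (negbTE nzb).
apply: dist_eq_of; first exact: tr.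
by apply: tr => //; rewrite /true_twins eq_sym.
Qed.

End Met2.

Section Mins.
Variables (U : finType) (P : pred {set U}).
Hypothesis PT : P setT.

Lemma bigmin_le S : P S -> \big[minn/#|U|]_(S | P S) #|S| <= #|S|.
Proof.
move=> PS; rewrite /index_enum; move: (mem_index_enum S); rewrite /index_enum.
elim: (Finite.enum _) => [//|y s IH]; rewrite inE big_cons.
case: (eqVneq S y) => [<- _|_ /= /IH h]; first by rewrite PS geq_minl.
by case: (P y) => //; rewrite geq_min h orbT.
Qed.

Lemma bigmin_att : exists2 S, P S & #|S| = \big[minn/#|U|]_(S | P S) #|S|.
Proof.
apply: (big_ind (fun m => exists2 S, P S & #|S| = m)).
- by exists setT; rewrite ?cardsT.
- move=> m1 m2 [S1 P1 <-] [S2 P2 <-].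
  by case: (leqP #|S1| #|S2|) => h; [exists S1 => //; rewrite (minn_idPl h)|
                                      exists S2 => //; rewrite (minn_idPr (ltnW h))].
- by move=> S PS; exists S.
Qed.

End Mins.

Lemma card_sig (I : finType) (T_ : I -> finType) (A : {set {i : I & T_ i}}) :
  #|A| = \sum_(i : I) #|[set x : T_ i | Tagged T_ x \in A]|.
Proof.
rewrite -sum1_card (partition_big (fun p : {i : I & T_ i} => tag p) predT) //=.
apply: eq_bigr => i _.
have inj : injective (@Tagged I i T_) by move=> x y; apply: eq_from_Tagged.
rewrite -(card_imset [set x | Tagged T_ x \in A] inj) -sum1_card.
apply: eq_bigl => p; rewrite /=.
case: p => j y /=.
apply/andP/imsetP => [[yA /eqP ji]|[x]].
  by subst j; exists y => //; rewrite inE.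
rewrite inE => xA E; move: (E) => [ji]; subst j.
by move=> _; rewrite E xA eqxx.
Qed.

Section Main.
Variables (T : finType) (e : rel T) (H : T -> sgraph).
Hypotheses (es : symmetric e) (ei : irreflexive e)
  (econn : forall x y, connect e x y) (card2 : 2 <= #|T|).

Local Notation L := (lex_vert H).
Local Notation E := (lex_adj e H).
Definition tg (i : T) (x : H i) : L := Tagged (fun i => svert (H i)) x.

Lemma tg_inj i : injective (@tg i).
Proof. by move=> x y; apply: eq_from_Tagged. Qed.

Lemma E_tg i j (x : H i) (w : H j) : E (tg x) (tg w) =
  e i j || ((i == j) && sadj x (tagged_as (tg x) (tg w))).
Proof. by []. Qed.

Lemma E_same i (x w : H i) : E (tg x) (tg w) = sadj x w.
Proof. by rewrite E_tg ei eqxx /= tagged_asE. Qed.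

Lemma E_irr : irreflexive E.
Proof. by case=> i x; rewrite -[existT _ i x]/(tg x) E_same sadj_irr. Qed.

Lemma elt (i : T) : exists y : H i, true.
Proof. by case/card_gt0P: (svert_nonempty (H i)) => y _; exists y. Qed.

Lemma neighbor i : exists z, e i z.
Proof.
have : 0 < #|[predD1 T & i]|.
  by move: card2; rewrite (cardD1 i) inE add1n ltnS.
case/card_gt0P=> j; rewrite !inE andbT => nji.
case/connectP: (econn i j) => -[|z p] /=; first by move=> _ ji; move: nji; rewrite ji eqxx.
by case/andP=> eiz _ _; exists z.
Qed.

Lemma walkL_proj m p q : walkn E m p q -> exists2 m', m' <= m & walkn e m' (tag p) (tag q).
Proof.
elim: m p => [|m IH] p /=; first by move/eqP=> ->; exists 0 => //=.
case/existsP=> z /andP[Epz /IH [m' lm W]].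
case/orP: Epz => [epz|/andP[/eqP tz _]].
  by exists m'.+1 => //=; apply/existsP; exists (tag z); rewrite epz W.
by exists m' => //; [apply: leqW | rewrite tz].
Qed.

Lemma walkG_lift m k i (x : H k) (v : H i) :
  walkn e m.+1 k i -> walkn E m.+1 (tg x) (tg v).
Proof.
elim: m k x => [|m IH] k x.
  case/existsP=> z /andP[ekz /eqP zi]; subst z.
  by apply/existsP; exists (tg v); rewrite /= eqxx andbT E_tg ekz.
case/existsP=> z /andP[ekz W].
case: (elt z) => y _.
apply/existsP; exists (tg y); rewrite E_tg ekz /=.
exact: IH.
Qed.

Lemma D1 k i (x : H k) (v : H i) : k != i -> dist E (tg x) (tg v) = dist e k i.
Proof.
move=> nki; apply: dist_eq_of => m W.
  by case: (walkL_proj W) => m' lm W'; exists m'.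
case: m W => [|m] W; first by move: nki; rewrite /= in W; rewrite W.
by exists m.+1 => //; apply: walkG_lift.
Qed.

Lemma D2 i (x v : H i) :
  dist E (tg x) (tg v) = Some (if x == v then 0 else if sadj x v then 1 else 2).
Proof.
have eqE : (tg x == tg v) = (x == v).
  by apply/eqP/eqP => [/tg_inj|->].
rewrite (@dist_small _ E (tg x) (tg v) E_irr) eqE E_same //.
case: eqP => //= _; case: (sadj x v) => //=.
case: (neighbor i) => z eiz; case: (elt z) => y _.
apply/existsP; exists (tg y); rewrite E_tg eiz /=.
apply/existsP; exists (tg v); rewrite eqxx andbT E_tg es eiz //.
Qed.

Lemma dist2H (G : sgraph) (x v : G) :
  dist2 (@sadj G) x v = if x == v then 0 else if sadj x v then 1 else 2.
Proof. by apply: dist2_formula; apply: sadj_irr. Qed.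

Lemma D2' i (x v : H i) : dist E (tg x) (tg v) = Some (dist2 (@sadj (H i)) x v).
Proof. by rewrite D2 dist2H. Qed.

Definition proj (S : {set L}) i : {set H i} := [set x | tg x \in S].

Lemma card_proj (S : {set L}) : #|S| = \sum_i #|proj S i|.
Proof. exact: (card_sig S). Qed.

Lemma proj_gen (S : {set L}) i : local_resolving E S -> local_adj_gen (@sadj (H i)) (proj S i).
Proof.
move=> /forallP RS; apply/forallP => x; apply/forallP => w; apply/implyP => axw.
have := forallP (RS (tg x)) (tg w); rewrite E_same axw /=.
case/existsP=> -[k y] /andP[yS].
rewrite -[existT _ k y]/(tg y) => dn.
case: (eqVneq k i) => [ki|nki].
  subst k; apply/existsP; exists y; rewrite inE yS /=.
  by move: dn; rewrite !D2'; apply: contra => /eqP ->.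
by move: dn; rewrite !D1 ?eqxx.
Qed.

Lemma set0_gen (G : sgraph) : local_adj_gen (@sadj G) setT.
Proof.
apply/forallP => x; apply/forallP => y; apply/implyP => axy.
apply/existsP; exists x; rewrite inE !dist2H eqxx axy.
by case: (eqVneq x y) => [xy|//]; move: axy; rewrite xy sadj_irr.
Qed.

Lemma basis_ex (G : sgraph) : exists B, local_adj_basis (@sadj G) B.
Proof.
case: (bigmin_att (set0_gen G)) => B gB cB.
by exists B; split.
Qed.

Lemma ladim_le (G : sgraph) (B : {set G}) : local_adj_gen (@sadj G) B -> ladim (@sadj G) <= #|B|.
Proof. exact: bigmin_le. Qed.

Lemma edgeless_ladim (G : sgraph) : edgeless (@sadj G) -> ladim (@sadj G) = 0.
Proof.
move=> el; apply/eqP; rewrite -leqn0.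
have <- : #|@set0 G| = 0 by rewrite cards0.
apply: ladim_le; apply/forallP => x; apply/forallP => y.
by rewrite (negbTE (el x y)).
Qed.

Lemma edgeless_calG (G : sgraph) : edgeless (@sadj G) -> in_calG (@sadj G).
Proof.
move=> el B [_ cB]; move: cB; rewrite edgeless_ladim // => /eqP; rewrite cards_eq0 => /eqP ->.
by case/card_gt0P: (svert_nonempty G) => v _; exists v; rewrite sub0set.
Qed.


Lemma sum_le_res (S : {set L}) : local_resolving E S -> \sum_i ladim (@sadj (H i)) <= #|S|.
Proof. by move=> RS; rewrite card_proj; apply: leq_sum => i _; apply: ladim_le; apply: proj_gen. Qed.

Lemma setT_res : local_resolving E setT.
Proof.
apply/forallP => p; apply/forallP => q; apply/implyP => Epq.
apply/existsP; exists p; rewrite inE dist0 /=.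
apply/eqP => /esym; apply: dist_ne0.
by apply: contraTneq Epq => ->; rewrite E_irr.
Qed.

Lemma ldim_ge : \sum_i ladim (@sadj (H i)) <= ldim E.
Proof. by rewrite /ldim; case: (bigmin_att setT_res) => S RS <-; apply: sum_le_res. Qed.

Lemma undist (S : {set L}) i j (v : H i) (w : H j) : local_resolving E S -> e i j ->
  proj S i \subset open_nb (@sadj (H i)) v -> proj S j \subset open_nb (@sadj (H j)) w ->
  exists k, [/\ k != i, k != j, proj S k != set0 & dist e k i != dist e k j].
Proof.
move=> /forallP RS eij si sj.
have := forallP (RS (tg v)) (tg w); rewrite E_tg eij /= => /existsP [[k y] /andP[yS]].
rewrite -[existT _ k y]/(tg y) => dn.
have nij : i != j by apply: contraTneq eij => ->; rewrite ei.
have dij : dist e i j = Some 1 := dist1 ei eij.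
have dji : dist e j i = Some 1 by rewrite es in eij; apply: dist1.
case: (eqVneq k i) => [ki|nki].
  subst k; have : y \in proj S i by rewrite inE.
  move/(subsetP si); rewrite inE => avy.
  move: dn; rewrite D2 D1 // dij sadj_sym avy.
  by case: (eqVneq y v) => [yv|//]; move: avy; rewrite yv sadj_irr.
case: (eqVneq k j) => [kj|nkj].
  subst k; have : y \in proj S j by rewrite inE.
  move/(subsetP sj); rewrite inE => awy.
  move: dn; rewrite [X in _ != X]D2 D1 // dji sadj_sym awy.
  by case: (eqVneq y w) => [yv|//]; move: awy; rewrite yv sadj_irr.
exists k; split => //; last by move: dn; rewrite !D1.
by apply/set0Pn; exists y; rewrite inE.
Qed.

Lemma sum_eq_each (I : finType) (a b : I -> nat) : (forall i, b i <= a i) ->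
  \sum_i a i = \sum_i b i -> forall i, a i = b i.
Proof.
move=> ba sab i; apply/eqP; rewrite eqn_leq ba andbT leqNgt; apply/negP => lt.
move: sab; rewrite (bigD1 i) //= [in RHS](bigD1 i) //= => h.
have : b i + \sum_(j | j != i) b j < a i + \sum_(j | j != i) a j.
  by rewrite -addSn leq_add // leq_sum.
by rewrite h ltnn.
Qed.


Definition goodb i (B : {set H i}) :=
  local_adj_gen (@sadj (H i)) B && (#|B| == ladim (@sadj (H i))).
Definition nocal i (B : {set H i}) :=
  [forall v, ~~ (B \subset open_nb (@sadj (H i)) v)].
Definition Bc i : {set H i} :=
  if [pick B | goodb B && nocal B] is Some B then B else odflt set0 [pick B | goodb B].

Lemma Bc_good i : goodb (Bc i).
Proof.
rewrite /Bc; case: pickP => [B /andP[]//|_].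
case: pickP => [B //| none].
case: (basis_ex (H i)) => B [gB cB].
by move: (none B); rewrite /goodb gB cB eqxx.
Qed.

Lemma Bc_nocal i : ~ in_calG (@sadj (H i)) -> nocal (Bc i).
Proof.
move=> ncal; rewrite /Bc; case: pickP => [B /andP[]//|none].
case: ncal => B [gB cB].
move: (none B); rewrite /goodb gB cB eqxx /= => /negbT.
by rewrite /nocal negb_forall => /existsP [v]; rewrite negbK => sub; exists v.
Qed.

Definition Sc : {set L} := [set p : L | tagged p \in Bc (tag p)].

Lemma proj_Sc i : proj Sc i = Bc i.
Proof. by apply/setP => x; rewrite !inE. Qed.

Lemma side i j (v : H i) (w : H j) : e i j -> ~ in_calG (@sadj (H i)) ->
  exists2 s, s \in Sc & dist E s (tg v) != dist E s (tg w).
Proof.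
move=> eij nc.
have nij : i != j by apply: contraTneq eij => ->; rewrite ei.
have := forallP (Bc_nocal nc) v; case/subsetPn => x xB; rewrite inE => nvx.
exists (tg x); first by rewrite inE.
rewrite D2 D1 // (dist1 ei eij) sadj_sym (negbTE nvx).
by case: (x == v).
Qed.

Lemma not_edgeless_B i : ~ edgeless (@sadj (H i)) -> exists x, x \in Bc i.
Proof.
move=> nel.
have [x0 [y0 a]] : exists x0 y0 : H i, sadj x0 y0.
  apply: NNPP => hn; apply: nel => x y; apply/negP => a; apply: hn; by exists x, y.
have /andP[/forallP g _] := Bc_good i.
have := forallP (g x0) y0; rewrite a /= => /existsP [s /andP[sB _]].
by exists s.
Qed.

Lemma twin_ne u y i j : true_twins e u y -> u != y -> e i j -> u != j ->
  dist e u i != dist e u j -> y != i.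
Proof.
move=> /eqP tw nuy eij nuj dn; apply/eqP => yi; subst y.
have eui : e u i by apply: twins_adj => //; apply/eqP.
have : j \in closed_nb e i by rewrite inE eij orbT.
rewrite -tw inE eq_sym (negbTE nuj) /= => euj.
by move: dn; rewrite (dist1 ei eui) (dist1 ei euj).
Qed.

Lemma Sc_res :
  (forall ui uj : T,
      e ui uj -> in_calG (@sadj (H ui)) -> in_calG (@sadj (H uj)) ->
      ~~ true_twins e ui uj ->
      exists u : T,
        ~ (~ in_TG e u /\ edgeless (@sadj (H u))) /\ u != ui /\ u != uj /\
        dist e u ui != dist e u uj) ->
  (forall ui uj : T, true_twins e ui uj ->
      in_calG (@sadj (H ui)) -> in_calG (@sadj (H uj)) -> ui = uj) ->
  local_resolving E Sc.
Proof.
move=> Ha Hb.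
apply/forallP => -[i v]; apply/forallP => -[j w]; apply/implyP.
rewrite -[existT _ i v]/(tg v) -[existT _ j w]/(tg w) E_tg.
case/orP => [eij | /andP[/eqP ij]]; last first.
  subst j; rewrite tagged_asE => avw.
  have /andP[/forallP g _] := Bc_good i.
  have := forallP (g v) w; rewrite avw /= => /existsP [x /andP[xB dn]].
  apply/existsP; exists (tg x); rewrite inE xB /=.
  by rewrite !D2'.
have nij : i != j by apply: contraTneq eij => ->; rewrite ei.
case: (classic (in_calG (@sadj (H i)))) => ci; last first.
  by case: (side v w eij ci) => s sS dn; apply/existsP; exists s; rewrite sS.
case: (classic (in_calG (@sadj (H j)))) => cj; last first.
  rewrite es in eij.
  case: (side w v eij cj) => s sS dn; apply/existsP; exists s; rewrite sS eq_sym //.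
have ntw : ~~ true_twins e i j by apply/negP => /Hb /(_ ci cj) ij; move: nij; rewrite ij eqxx.
case: (Ha i j eij ci cj ntw) => u [nVE [nui [nuj dn]]].
have [u0 [nu0i nu0j dn0 nel]] : exists u0, [/\ u0 != i, u0 != j,
    dist e u0 i != dist e u0 j & ~ edgeless (@sadj (H u0))].
  case: (classic (edgeless (@sadj (H u)))) => elu; last by exists u.
  have : in_TG e u by apply: NNPP => nt; apply: nVE.
  case=> y [nyu tw].
  have nuy : u != y by rewrite eq_sym.
  have yi : y != i by apply: (twin_ne tw nuy eij nuj dn).
  have yj : y != j.
    by apply: (twin_ne tw nuy _ nui); rewrite 1?es // eq_sym.
  exists y; split => //.
    by rewrite -(twin_dist es tw) 1?eq_sym // -(twin_dist es tw (k := j)) 1?eq_sym.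
  move=> ely; move/eqP: nuy; apply; apply: (Hb _ _ tw); exact: edgeless_calG.
case: (not_edgeless_B nel) => x xB.
apply/existsP; exists (tg x); rewrite inE xB /= !D1 //.
Qed.

Lemma main_lemma :
  ldim E = \sum_(i : T) ladim (@sadj (H i))
  <->
  ((forall ui uj : T,
      e ui uj -> in_calG (@sadj (H ui)) -> in_calG (@sadj (H uj)) ->
      ~~ true_twins e ui uj ->
      exists u : T,
        ~ (~ in_TG e u /\ edgeless (@sadj (H u))) /\ u != ui /\ u != uj /\
        dist e u ui != dist e u uj)
   /\
   (forall ui uj : T, true_twins e ui uj ->
      in_calG (@sadj (H ui)) -> in_calG (@sadj (H uj)) -> ui = uj)).
Proof.
split.
  move=> hl.
  case: (bigmin_att setT_res) => S RS cS.
  have cS' : #|S| = \sum_i ladim (@sadj (H i)) by rewrite cS -hl.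
  have each : forall i, #|proj S i| = ladim (@sadj (H i)).
    apply: sum_eq_each; first by move=> i; apply: ladim_le; apply: proj_gen.
    by rewrite -card_proj.
  have basis : forall i, local_adj_basis (@sadj (H i)) (proj S i).
    by move=> i; split; [apply: proj_gen | apply: each].
  split.
    move=> ui uj eij ci cj _.
    case: (ci _ (basis ui)) => v sv; case: (cj _ (basis uj)) => w sw.
    case: (undist RS eij sv sw) => k [nki nkj ne dn].
    exists k; split; last by [].
    case=> _ el; move: ne; rewrite -cards_eq0 each edgeless_ladim //.
  move=> ui uj tw ci cj; apply/eqP; apply: contraT => nij.
  have eij := twins_adj tw nij.
  case: (ci _ (basis ui)) => v sv; case: (cj _ (basis uj)) => w sw.
  case: (undist RS eij sv sw) => k [nki nkj ne dn].
  by move: dn; rewrite !(dist_sym es k) (twin_dist es tw nki nkj) eqxx.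
case=> Ha Hb.
apply/eqP; rewrite eqn_leq ldim_ge andbT.
have -> : \sum_i ladim (@sadj (H i)) = #|Sc|.
  rewrite card_proj; apply: eq_bigr => i _; rewrite proj_Sc.
  by have /andP[_ /eqP ->] := Bc_good i.
rewrite /ldim; apply: bigmin_le; exact: Sc_res.
Qed.

End Main.
Theorem corollary3 (T : finType) (e : rel T) (H : T -> sgraph) :
  symmetric e -> irreflexive e ->
  (forall x y, connect e x y) -> 2 <= #|T| ->
  ldim (lex_adj e H) = \sum_(i : T) ladim (@sadj (H i))
  <->
  ((forall ui uj : T,
      e ui uj -> in_calG (@sadj (H ui)) -> in_calG (@sadj (H uj)) ->
      ~~ true_twins e ui uj ->
      exists u : T,
        ~ (~ in_TG e u /\ edgeless (@sadj (H u))) /\ u != ui /\ u != uj /\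
        dist e u ui != dist e u uj)
   /\
   (forall ui uj : T, true_twins e ui uj ->
      in_calG (@sadj (H ui)) -> in_calG (@sadj (H uj)) -> ui = uj)).
Proof. move=> es ei ec c2; exact: main_lemma. Qed.
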